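(* Let $X$ be a Baire topological group. Then the following conditions are equivalent: (1) $X$ is metrizable; (2) $X$ is point-cosmic; (3) $X$ is a $\sigma$-space.
   Context: Topological groups are assumed Hausdorff. A topological space is Baire if for every sequence $(U_n)_{n\in\omega}$ of open dense subsets the intersection $\bigcap_n U_n$ is dense. A family $\mathcal N$ of subsets of a topological space $X$ is a network at a point $x\in X$ if for every neighborhood $O_x$ of $x$ the union $\bigcup\{N\in\mathcal N: N\subset O_x\}$ is a neighborhood of $x$; $\mathcal N$ is a network if it is a network at each point of $X$. A regular topological space $X$ is point-cosmic if each point $x\in X$ has a countable network $\mathcal N_x$ at $x$. A regular topological space is a $\sigma$-space if it has a $\sigma$-discrete network (a network that is a countable union of discrete families). *)

(* Defs.v *)
From Stdlib Require Import Reals.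
Open Scope R_scope.

Section Top.
Variable X : Type.
Definition set := X -> Prop.

Definition is_topology (op : set -> Prop) : Prop :=
  op (fun _ => True) /\
  (forall U V, op U -> op V -> op (fun x => U x /\ V x)) /\
  (forall F : set -> Prop, (forall U, F U -> op U) ->
     op (fun x => exists U, F U /\ U x)).

Variable op : set -> Prop.

Definition nbhd (N : set) (x : X) : Prop :=
  exists U, op U /\ U x /\ (forall y, U y -> N y).

Definition closure (A : set) : set :=
  fun x => forall N, nbhd N x -> exists y, N y /\ A y.

Definition hausdorff : Prop :=
  forall x y, x <> y -> exists U V, op U /\ op V /\ U x /\ V y /\
    (forall z, U z -> V z -> False).

Definition regular : Prop :=
  hausdorff /\
  forall x U, op U -> U x ->
    exists V, op V /\ V x /\ (forall y, closure V y -> U y).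

Definition dense (A : set) : Prop :=
  forall U, op U -> (exists x, U x) -> exists x, U x /\ A x.

Definition baire : Prop :=
  forall Us : nat -> set, (forall n, op (Us n) /\ dense (Us n)) ->
    dense (fun x => forall n, Us n x).

Definition is_metric (d : X -> X -> R) : Prop :=
  (forall x y, 0 <= d x y) /\ (forall x y, d x y = 0 <-> x = y) /\
  (forall x y, d x y = d y x) /\ (forall x y z, d x z <= d x y + d y z).

Definition metrizable : Prop :=
  exists d, is_metric d /\
    forall U, op U <-> (forall x, U x -> exists eps, 0 < eps /\
                                   forall y, d x y < eps -> U y).

Definition network_at (F : set -> Prop) (x : X) : Prop :=
  forall O, nbhd O x ->
    nbhd (fun y => exists N, F N /\ (forall z, N z -> O z) /\ N y) x.

Definition network (F : set -> Prop) : Prop := forall x, network_at F x.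

Definition countable_family (F : set -> Prop) : Prop :=
  exists f : nat -> set, forall N, F N -> exists n, f n = N.

Definition point_cosmic : Prop :=
  regular /\ forall x, exists F, countable_family F /\ network_at F x.

Definition discrete_family (F : set -> Prop) : Prop :=
  forall x, exists O, nbhd O x /\
    forall A B, F A -> F B -> (exists y, O y /\ A y) -> (exists y, O y /\ B y) ->
      forall z, A z <-> B z.

Definition sigma_space : Prop :=
  regular /\ exists D : nat -> (set -> Prop),
    (forall n, discrete_family (D n)) /\
    network (fun N => exists n, D n N).

End Top.

Definition topological_group (X : Type) (op : set X -> Prop)
  (mul : X -> X -> X) (inv : X -> X) (e : X) : Prop :=
  is_topology X op /\
  (forall x y z, mul (mul x y) z = mul x (mul y z)) /\
  (forall x, mul e x = x) /\ (forall x, mul x e = x) /\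
  (forall x, mul (inv x) x = e) /\ (forall x, mul x (inv x) = e) /\
  (forall x y W, nbhd X op W (mul x y) ->
     exists U V, nbhd X op U x /\ nbhd X op V y /\
       forall u v, U u -> V v -> W (mul u v)) /\
  (forall x W, nbhd X op W (inv x) ->
     exists U, nbhd X op U x /\ forall u, U u -> W (inv u)) /\
  hausdorff X op.

(* Main.v *)
Require Import Defs.
From Stdlib Require Import Reals Lra Lia List ClassicalEpsilon Classical
  FunctionalExtensionality PropExtensionality Cantor.
Open Scope R_scope.

Section Basics.
Variable X : Type.
Variable op : set X -> Prop.
Hypothesis Htop : is_topology X op.

Definition sub (A B : set X) := forall x, A x -> B x.

Lemma set_ext (A B : set X) : (forall x, A x <-> B x) -> A = B.
Proof.
  intro H; apply functional_extensionality; intro x;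
  apply propositional_extensionality; apply H.
Qed.

Lemma op_ext (A B : set X) : op A -> (forall x, A x <-> B x) -> op B.
Proof. intros HA H; rewrite <- (set_ext A B H); exact HA. Qed.

Lemma op_full : op (fun _ => True).
Proof. destruct Htop as [H _]; exact H. Qed.

Lemma op_inter A B : op A -> op B -> op (fun x => A x /\ B x).
Proof. destruct Htop as [_ [H _]]; apply H. Qed.

Lemma op_union (F : set X -> Prop) : (forall U, F U -> op U) ->
  op (fun x => exists U, F U /\ U x).
Proof. destruct Htop as [_ [_ H]]; apply H. Qed.

Lemma op_or A B : op A -> op B -> op (fun x => A x \/ B x).
Proof.
  intros HA HB.
  apply op_ext with (fun x => exists U, (U = A \/ U = B) /\ U x).
  - apply op_union. intros U [-> | ->]; auto.
  - intro x; split.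
    + intros [U [[-> | ->] H]]; auto.
    + intros [H|H]; eauto.
Qed.

Lemma op_of_nbhd (A : set X) : (forall x, A x -> nbhd X op A x) -> op A.
Proof.
  intro H.
  apply op_ext with (fun x => exists U, (op U /\ sub U A) /\ U x).
  - apply op_union. intros U [HU _]; exact HU.
  - intro x; split.
    + intros [U [[_ HU] Ux]]; auto.
    + intro Ax. destruct (H x Ax) as [U [HU [Ux HUA]]]. exists U; auto.
Qed.

Lemma nbhd_open (U : set X) x : op U -> U x -> nbhd X op U x.
Proof. intros; exists U; auto. Qed.

Lemma nbhd_mono (A B : set X) x : nbhd X op A x -> sub A B -> nbhd X op B x.
Proof. intros [U [HU [Ux H]]] HAB; exists U; split; auto. Qed.

Lemma nbhd_inter (A B : set X) x : nbhd X op A x -> nbhd X op B x ->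
  nbhd X op (fun y => A y /\ B y) x.
Proof.
  intros [U [HU [Ux H]]] [V [HV [Vx H']]].
  exists (fun y => U y /\ V y); split; [apply op_inter; auto|]; split; auto.
  intros y [? ?]; auto.
Qed.

Lemma nbhd_pt (A : set X) x : nbhd X op A x -> A x.
Proof. intros [U [_ [Ux H]]]; auto. Qed.

Definition interior (A : set X) : set X :=
  fun x => exists U, op U /\ U x /\ sub U A.

Lemma op_interior A : op (interior A).
Proof.
  apply op_of_nbhd. intros x [U [HU [Ux HUA]]].
  exists U; split; auto; split; auto. intros y Uy; exists U; auto.
Qed.

Lemma interior_sub A : sub (interior A) A.
Proof. intros x [U [_ [Ux H]]]; auto. Qed.

Lemma closure_incl (A : set X) : sub A (closure X op A).
Proof. intros x Ax N HN; exists x; split; auto. apply nbhd_pt; auto. Qed.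

Lemma closure_mono (A B : set X) : sub A B -> sub (closure X op A) (closure X op B).
Proof.
  intros HAB x Hx N HN. destruct (Hx N HN) as [y [Ny Ay]]; eauto.
Qed.

Lemma op_compl_closure A : op (fun x => ~ closure X op A x).
Proof.
  apply op_of_nbhd. intros x Hx.
  apply not_all_ex_not in Hx. destruct Hx as [N HN].
  apply imply_to_and in HN. destruct HN as [HN Hno].
  destruct HN as [U [HU [Ux HUN]]].
  exists U; split; auto; split; auto.
  intros y Uy Hy. apply Hno.
  destruct (Hy U (nbhd_open U y HU Uy)) as [z [Uz Az]]. eauto.
Qed.

End Basics.
Section Group.
Variable X : Type.
Variable op : set X -> Prop.
Variable mul : X -> X -> X.
Variable inv : X -> X.
Variable e : X.
Hypothesis HG : topological_group X op mul inv e.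

Lemma G_top : is_topology X op. Proof. apply HG. Qed.
Lemma G_assoc x y z : mul (mul x y) z = mul x (mul y z). Proof. apply HG. Qed.
Lemma G_el x : mul e x = x. Proof. apply HG. Qed.
Lemma G_er x : mul x e = x. Proof. apply HG. Qed.
Lemma G_il x : mul (inv x) x = e. Proof. apply HG. Qed.
Lemma G_ir x : mul x (inv x) = e. Proof. apply HG. Qed.
Lemma G_mulc x y W : nbhd X op W (mul x y) ->
     exists U V, nbhd X op U x /\ nbhd X op V y /\
       forall u v, U u -> V v -> W (mul u v).
Proof. apply HG. Qed.
Lemma G_invc x W : nbhd X op W (inv x) ->
     exists U, nbhd X op U x /\ forall u, U u -> W (inv u).
Proof. apply HG. Qed.
Lemma G_haus : hausdorff X op. Proof. apply HG. Qed.

Lemma G_canc a z : mul (inv a) (mul a z) = z.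
Proof. rewrite <- G_assoc, G_il, G_el; auto. Qed.
Lemma G_canc' a z : mul a (mul (inv a) z) = z.
Proof. rewrite <- G_assoc, G_ir, G_el; auto. Qed.
Lemma G_inv_unique a b : mul a b = e -> b = inv a.
Proof.
  intro H. rewrite <- (G_canc a b), H, G_er; auto.
Qed.
Lemma G_invinv a : inv (inv a) = a.
Proof. symmetry; apply G_inv_unique; apply G_il. Qed.
Lemma G_inve : inv e = e.
Proof. symmetry; apply G_inv_unique; apply G_el. Qed.
Lemma G_invmul a b : inv (mul a b) = mul (inv b) (inv a).
Proof.
  symmetry; apply G_inv_unique.
  rewrite G_assoc, <- (G_assoc b), G_ir, G_el, G_ir; auto.
Qed.
Lemma G_chain3 x w z y :
  mul (mul (inv x) w) (mul (mul (inv w) z) (mul (inv z) y)) = mul (inv x) y.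
Proof.
  rewrite !G_assoc. rewrite G_canc'. rewrite G_canc'. auto.
Qed.

Lemma trans_nbhd V a z : nbhd X op V (mul a z) -> nbhd X op (fun w => V (mul a w)) z.
Proof.
  intro H. destruct (G_mulc _ _ _ H) as [P [Q [HP [HQ HPQ]]]].
  apply nbhd_mono with Q; auto. intros w Qw. apply HPQ; auto.
  apply nbhd_pt with op; auto.
Qed.

Lemma op_transl G a : op G -> op (fun z => G (mul a z)).
Proof.
  intro HGo. apply op_of_nbhd; [apply G_top|]. intros z Hz.
  apply trans_nbhd. apply nbhd_open; auto.
Qed.

Lemma op_inv_pre G : op G -> op (fun z => G (inv z)).
Proof.
  intro HGo. apply op_of_nbhd; [apply G_top|]. intros z Hz.
  destruct (G_invc z G (nbhd_open X op G _ HGo Hz)) as [U [HU HUG]].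
  apply nbhd_mono with U; auto.
Qed.

Lemma open_in_nbhd (A : set X) x : nbhd X op A x ->
  exists U, op U /\ U x /\ sub X U A.
Proof. intros [U H]; exists U; exact H. Qed.

Lemma diff_cont O : nbhd X op O e -> exists W, op W /\ W e /\
  forall a b, W a -> W b -> O (mul (inv a) b).
Proof.
  intro HO.
  assert (H1 : nbhd X op O (mul (inv e) e)) by (rewrite G_inve, G_el; auto).
  destruct (G_mulc _ _ _ H1) as [P [Q [HP [HQ HPQ]]]].
  destruct (G_invc e P HP) as [R [HR HRP]].
  destruct (open_in_nbhd _ _ (nbhd_inter X op G_top _ _ _ HR HQ)) as [W [HW [We HWs]]].
  exists W; split; auto; split; auto.
  intros a b Wa Wb. apply HPQ.
  - apply HRP. apply (HWs a Wa).
  - apply (HWs b Wb).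
Qed.

Lemma cube_nbhd O : nbhd X op O e -> exists V, op V /\ V e /\
  (forall a, V a -> V (inv a)) /\
  forall a b c, V a -> V b -> V c -> O (mul a (mul b c)).
Proof.
  intro HO.
  assert (H1 : nbhd X op O (mul e (mul e e))) by (rewrite !G_el; auto).
  destruct (G_mulc _ _ _ H1) as [P [Q [HP [HQ HPQ]]]].
  destruct (G_mulc _ _ _ HQ) as [P' [Q' [HP' [HQ' HPQ']]]].
  assert (HN : nbhd X op (fun y => P y /\ (P' y /\ Q' y)) e).
  { apply nbhd_inter; auto using G_top. apply nbhd_inter; auto using G_top. }
  destruct (open_in_nbhd _ _ HN) as [W [HW [We HWs]]].
  exists (fun a => W a /\ W (inv a)).
  split; [apply op_inter; auto using G_top; apply op_inv_pre; auto|].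
  split; [split; auto; rewrite G_inve; auto|].
  split; [intros a [Ha Hb]; rewrite G_invinv; auto|].
  intros a b c [Wa _] [Wb _] [Wc _].
  apply HPQ; [apply HWs; auto|]. apply HPQ'; [apply HWs; auto|apply HWs; auto].
Qed.

Definition fc := exists B : nat -> set X, (forall k, op (B k) /\ B k e) /\
  forall O, nbhd X op O e -> exists k, sub X (B k) O.

Lemma pi_base_fc (H : nat -> set X) : regular X op ->
  (forall i, op (H i)) ->
  (forall V, nbhd X op V e -> exists i, (exists a, H i a) /\ sub X (H i) (closure X op V)) ->
  fc.
Proof.
  intros Hreg Hop Hpi.
  exists (fun i z => (exists a, H i a /\ H i (mul a z)) \/ ~ (exists a, H i a)).
  split.
  - intro k. destruct (classic (exists a, H k a)) as [Hne | Hem].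
    + split.
      * apply op_ext with (fun z => exists U, (exists a, H k a /\ U = (fun z => H k (mul a z))) /\ U z).
        { apply op_union; [apply G_top|]. intros U [a [_ ->]]. apply op_transl; auto. }
        intro z; split.
        { intros [U [[a [Ha ->]] Hz]]. left; eauto. }
        { intros [[a [Ha Hz]] | Hn]; [|contradiction]. exists (fun z => H k (mul a z)); eauto. }
      * left. destruct Hne as [a Ha]. exists a; rewrite G_er; auto.
    + split; [| right; auto].
      apply op_ext with (fun _ => True); [apply op_full, G_top|]. intuition.
  - intros O HO.
    destruct (diff_cont O HO) as [W [HW [We HWO]]].
    destruct Hreg as [_ Hreg]. destruct (Hreg e W HW We) as [V [HV [Ve HVW]]].
    destruct (Hpi V (nbhd_open X op V e HV Ve)) as [i [Hne Hsub]].
    exists i. intros z [[a [Ha Haz]] | Hn]; [|contradiction].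
    rewrite <- (G_canc a z). apply HWO; apply HVW; apply Hsub; auto.
Qed.

End Group.
Section Baire.
Variable X : Type.
Variable op : set X -> Prop.
Variable mul : X -> X -> X.
Variable inv : X -> X.
Variable e : X.
Hypothesis HG : topological_group X op mul inv e.
Hypothesis HB : baire X op.

Let Htop := G_top X op mul inv e HG.

Lemma dense_case (U : set X) (A : set X) : op U -> (exists x, U x) ->
  exists x, U x /\ (interior X op (closure X op A) x \/ ~ closure X op A x).
Proof.
  intros HU [x0 Ux0].
  destruct (classic (exists x, U x /\ ~ closure X op A x)) as [[x [Ux Hx]] | Hno].
  - exists x; auto.
  - exists x0; split; auto. left. exists U; split; auto; split; auto.
    intros y Uy. apply NNPP; intro Hy; apply Hno; eauto.
Qed.

Lemma pc_fc : point_cosmic X op -> fc X op e.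
Proof.
  intros [Hreg Hpc].
  destruct (Hpc e) as [F [[f Hf] Hnet]].
  apply (pi_base_fc X op mul inv e HG (fun i => interior X op (closure X op (f i))));
    [exact Hreg | intro; apply op_interior; auto |].
  intros V HV.
  destruct (open_in_nbhd X op _ _ HV) as [V' [HV' [V'e HV'V]]].
  pose proof (Hnet V' (nbhd_open X op _ _ HV' V'e)) as HW.
  destruct (open_in_nbhd X op _ _ HW) as [P [HP [Pe HPW]]].
  set (Us := fun i x => ~ (sub X (f i) V' /\ ~ (exists a, interior X op (closure X op (f i)) a))
                        \/ ~ closure X op (f i) x).
  assert (HUs : forall n, op (Us n) /\ dense X op (Us n)).
  { intro n. destruct (classic (sub X (f n) V' /\ ~ (exists a, interior X op (closure X op (f n)) a)))
      as [Hc | Hc].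
    - split.
      + apply op_ext with (fun x => ~ closure X op (f n) x); [apply op_compl_closure; auto|].
        intro x; unfold Us; tauto.
      + intros U HU Hne. destruct (dense_case U (f n) HU Hne) as [x [Ux [Hi | Hi]]].
        * exfalso; apply (proj2 Hc); eauto.
        * exists x; split; auto; right; auto.
    - split.
      + apply op_ext with (fun _ => True); [apply op_full; auto|]. intro x; unfold Us; tauto.
      + intros U HU [x Ux]; exists x; split; auto; left; auto. }
  destruct (HB Us HUs P HP (ex_intro _ e Pe)) as [p [Pp Hp]].
  destruct (HPW p Pp) as [N [FN [HNV Np]]].
  destruct (Hf N FN) as [i Hi]. subst N.
  exists i. split.
  - destruct (Hp i) as [Hc | Hc].
    + apply NNPP; intro Hn; apply Hc; split; auto.
    + exfalso; apply Hc; apply closure_incl; auto.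
  - intros z Hz. apply interior_sub in Hz.
    apply (closure_mono X op (f i) V); auto.
    intros y Hy; apply HV'V; auto.
Qed.

Lemma sigma_fc : sigma_space X op -> fc X op e.
Proof.
  intros [Hreg [D [Hdisc Hnet]]].
  set (A := fun n y => exists M, D n M /\ M y).
  set (Us := fun n x => interior X op (closure X op (A n)) x \/ ~ closure X op (A n) x).
  assert (HUs : forall n, op (Us n) /\ dense X op (Us n)).
  { intro n; split.
    - apply op_or; auto. apply op_interior; auto. apply op_compl_closure; auto.
    - intros U HU Hne. apply dense_case; auto. }
  destruct (HB Us HUs (fun _ => True) (op_full X op Htop) (ex_intro _ e I)) as [x [_ Hx]].
  set (Pd := fun n O => nbhd X op O x /\
      forall A0 B0, D n A0 -> D n B0 -> (exists y, O y /\ A0 y) -> (exists y, O y /\ B0 y) ->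
      forall z, A0 z <-> B0 z).
  set (O := fun n => epsilon (inhabits (fun _ : X => True)) (Pd n)).
  assert (HO : forall n, Pd n (O n)).
  { intro n. apply epsilon_spec. destruct (Hdisc n x) as [O0 H0]. exists O0; exact H0. }
  set (H := fun n y => exists G, (exists M, D n M /\ (exists w, O n w /\ M w) /\
                                   G = interior X op (closure X op M)) /\ G y).
  assert (HHo : forall n, op (H n)).
  { intro n. apply op_union; auto. intros U [M [_ [_ ->]]]. apply op_interior; auto. }
  assert (Hloc : forall V, nbhd X op V x -> exists n, H n x /\ sub X (H n) V).
  { intros V HV.
    destruct (open_in_nbhd X op _ _ HV) as [V' [HV' [V'x HV'V]]].
    destruct Hreg as [_ Hreg'].
    destruct (Hreg' x V' HV' V'x) as [V1 [HV1 [V1x HV1c]]].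
    pose proof (Hnet x V1 (nbhd_open X op _ _ HV1 V1x)) as HW.
    apply nbhd_pt in HW. destruct HW as [N [[n DN] [HNV Nx]]].
    destruct (HO n) as [HOn HOd].
    assert (HNO : exists w, O n w /\ N w) by (exists x; split; auto; apply nbhd_pt with op; auto).
    exists n. split.
    - exists (interior X op (closure X op N)). split; [exists N; auto|].
      destruct (Hx n) as [Hi | Hc]; [| exfalso; apply Hc; apply closure_incl; exists N; auto].
      destruct Hi as [P [HP [Px HPs]]].
      destruct (open_in_nbhd X op _ _ HOn) as [O' [HO' [O'x HO's]]].
      exists (fun y => P y /\ O' y). split; [apply op_inter; auto|]. split; [auto|].
      intros y [Py O'y] R HR.
      assert (HRQ : nbhd X op (fun z => R z /\ (P z /\ O' z)) y).
      { apply nbhd_inter; auto. apply nbhd_open; auto. apply op_inter; auto. }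
      destruct (HPs y Py _ HRQ) as [w [[Rw [Pw O'w]] [M [DM Mw]]]].
      exists w; split; auto.
      apply (HOd M N DM DN); auto. exists w; split; auto.
    - intros y [G [[M [DM [HMO ->]]] Hy]].
      apply interior_sub in Hy. apply HV'V. apply HV1c.
      apply (closure_mono X op N V1); auto.
      intros R HR. destruct (Hy R HR) as [w [Rw Mw]]. exists w; split; auto.
      apply (HOd M N DM DN); auto. }
  apply (pi_base_fc X op mul inv e HG (fun n z => H n (mul x z))); auto.
  { intro; apply (op_transl X op mul inv e HG); auto. }
  intros V HV.
  assert (HV' : nbhd X op (fun w => V (mul (inv x) w)) x).
  { apply (trans_nbhd X op mul inv e HG). rewrite (G_il X op mul inv e HG); auto. }
  destruct (Hloc _ HV') as [n [Hnx Hns]].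
  exists n. split.
  - exists e; rewrite (G_er X op mul inv e HG); auto.
  - intros z Hz. apply closure_incl. apply Hns in Hz.
    rewrite (G_canc X op mul inv e HG) in Hz; auto.
Qed.

End Baire.
Definition pw (n : nat) : R := / 2 ^ n.

Lemma pw_pos n : 0 < pw n.
Proof. unfold pw. apply Rinv_0_lt_compat, pow_lt; lra. Qed.

Lemma pw_S n : pw (S n) = pw n / 2.
Proof.
  unfold pw. simpl. assert (2 ^ n <> 0) by (apply pow_nonzero; lra).
  field; auto.
Qed.

Lemma pw_lt m n : (m < n)%nat -> pw n < pw m.
Proof.
  intro H. unfold pw. apply Rinv_lt_contravar.
  - apply Rmult_lt_0_compat; apply pow_lt; lra.
  - apply Rlt_pow; auto; lra.
Qed.

Lemma pw_le m n : (m <= n)%nat -> pw n <= pw m.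
Proof.
  intro H. destruct (Nat.eq_dec m n) as [->|Hne]; [lra|].
  left; apply pw_lt; lia.
Qed.

Lemma pw_ge m n : pw m <= pw n -> (n <= m)%nat.
Proof.
  intro H. destruct (Compare_dec.le_lt_dec n m) as [|Hlt]; auto.
  apply pw_lt in Hlt. lra.
Qed.

Lemma INR_le_pow n : INR n <= 2 ^ n.
Proof.
  induction n; [simpl; lra|].
  rewrite S_INR. simpl. assert (1 <= 2 ^ n) by (apply pow_R1_Rle; lra). lra.
Qed.

Lemma pw_small eps : 0 < eps -> exists n, pw n < eps.
Proof.
  intro He. destruct (archimed_cor1 eps He) as [N [HN HN0]].
  exists N. eapply Rle_lt_trans; [|exact HN]. unfold pw.
  apply Rinv_le_contravar; [apply lt_0_INR; auto | apply INR_le_pow].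
Qed.

Section BK.
Variable X : Type.
Variable op : set X -> Prop.
Variable mul : X -> X -> X.
Variable inv : X -> X.
Variable e : X.
Hypothesis HG : topological_group X op mul inv e.
Hypothesis Hfc : fc X op e.

Let Htop := G_top X op mul inv e HG.

Definition good_step (W : set X) (V : set X) : Prop :=
  op V /\ V e /\ (forall a, V a -> V (inv a)) /\
  forall a b c, V a -> V b -> V c -> W (mul a (mul b c)).

Lemma exists_U : exists U : nat -> set X,
  (forall x, U 0%nat x) /\ (forall n, op (U n) /\ U n e) /\
  (forall n a, U n a -> U n (inv a)) /\
  (forall n a b c, U (S n) a -> U (S n) b -> U (S n) c -> U n (mul a (mul b c))) /\
  (forall O, nbhd X op O e -> exists n, sub X (U n) O).
Proof.
  destruct Hfc as [B [HB1 HB2]].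
  set (step := fun n (W : set X) =>
         epsilon (inhabits (fun _ : X => True)) (good_step (fun z => W z /\ B n z))).
  set (U := fix U n := match n with 0%nat => (fun _ => True) | S n => step n (U n) end).
  assert (Hstep : forall n W, op W -> W e -> good_step (fun z => W z /\ B n z) (step n W)).
  { intros n W HW We. apply epsilon_spec.
    destruct (cube_nbhd X op mul inv e HG (fun z => W z /\ B n z)) as [V HV].
    - apply nbhd_open; auto. apply op_inter; auto; apply HB1. split; auto; apply HB1.
    - exists V; exact HV. }
  assert (HUo : forall n, op (U n) /\ U n e).
  { induction n; simpl.
    - split; auto. apply op_full; auto.
    - destruct IHn as [Ho Hn]. destruct (Hstep n _ Ho Hn) as [? [? _]]; auto. }
  exists U. split; [simpl; auto|]. split; [auto|]. split.
  { intros [|n] a Ha; simpl in *; auto.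
    destruct (HUo n) as [Ho Hn]. destruct (Hstep n _ Ho Hn) as [_ [_ [Hs _]]]; auto. }
  split.
  { intros n a b c Ha Hb Hc. simpl in *.
    destruct (HUo n) as [Ho Hn]. destruct (Hstep n _ Ho Hn) as [_ [_ [_ Hcube]]].
    apply (Hcube a b c); auto. }
  intros O HO. destruct (HB2 O HO) as [k Hk]. exists (S k).
  intros a Ha. apply Hk. simpl in Ha.
  destruct (HUo k) as [Ho Hn]. destruct (Hstep k _ Ho Hn) as [_ [Hse [_ Hcube]]].
  pose proof (Hcube a e e Ha Hse Hse) as H.
  rewrite (G_el X op mul inv e HG), (G_er X op mul inv e HG) in H. tauto.
Qed.

End BK.
Section Chain.
Variable X : Type.
Variable op : set X -> Prop.
Variable mul : X -> X -> X.
Variable inv : X -> X.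
Variable e : X.
Hypothesis HG : topological_group X op mul inv e.
Variable U : nat -> set X.
Hypothesis HU0 : forall x, U 0%nat x.
Hypothesis HUo : forall n, op (U n) /\ U n e.
Hypothesis HUs : forall n a, U n a -> U n (inv a).
Hypothesis HUc : forall n a b c, U (S n) a -> U (S n) b -> U (S n) c -> U n (mul a (mul b c)).
Hypothesis HUb : forall O, nbhd X op O e -> exists n, sub X (U n) O.

Let Htop := G_top X op mul inv e HG.

Lemma U_dec n m : (n <= m)%nat -> sub X (U m) (U n).
Proof.
  induction 1; intros a Ha; auto.
  apply IHle. pose proof (HUc m a e e Ha (proj2 (HUo _)) (proj2 (HUo _))) as Hq.
  rewrite (G_el X op mul inv e HG), (G_er X op mul inv e HG) in Hq; auto.
Qed.

Fixpoint chain (x y : X) (l : list (X * nat)) : Prop :=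
  match l with
  | nil => x = y
  | (z, n) :: l' => U n (mul (inv x) z) /\ chain z y l'
  end.

Fixpoint cost (l : list (X * nat)) : R :=
  match l with
  | nil => 0
  | (_, n) :: l' => pw n + cost l'
  end.

Lemma cost_nonneg l : 0 <= cost l.
Proof. induction l as [|[z n] l IH]; simpl; [lra|]. pose proof (pw_pos n); lra. Qed.

Lemma cost_app l1 l2 : cost (l1 ++ l2) = cost l1 + cost l2.
Proof. induction l1 as [|[z n] l IH]; simpl; [lra|]. rewrite IH; lra. Qed.

Lemma chain_app x y l1 l2 : chain x y (l1 ++ l2) <-> exists w, chain x w l1 /\ chain w y l2.
Proof.
  revert x; induction l1 as [|[z n] l IH]; intro x; simpl.
  - split; [intro H; exists x; auto | intros [w [-> H]]; auto].
  - split.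
    + intros [H1 H2]. apply IH in H2. destruct H2 as [w [? ?]]. exists w; auto.
    + intros [w [[H1 H2] H3]]. split; auto. apply IH; eauto.
Qed.

Lemma split_list l A H : l <> nil -> 0 <= A -> A <= H -> A + cost l <= 2 * H ->
  exists l1 p l2, l = l1 ++ p :: l2 /\ A + cost l1 <= H /\ cost l2 <= H.
Proof.
  revert A; induction l as [|[z m] l IH]; intros A Hne HA HAH Htot; [contradiction|].
  simpl in Htot. pose proof (pw_pos m).
  destruct (Rlt_le_dec H (A + pw m)) as [Hlt | Hle].
  - exists nil, (z, m), l. simpl. split; auto. split; lra.
  - destruct l as [|q l'].
    + exists nil, (z, m), nil. simpl. split; auto. split; lra.
    + destruct (IH (A + pw m)) as [l1 [p [l2 [Heq [H1 H2]]]]]; try lra.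
      { discriminate. }
      exists ((z, m) :: l1), p, l2. rewrite Heq. simpl. split; auto. split; lra.
Qed.

Lemma chain_lemma k : forall l, (length l <= k)%nat -> forall n x y,
  chain x y l -> cost l <= pw (S n) -> U n (mul (inv x) y).
Proof.
  induction k as [|k IH]; intros l Hlen n x y Hc Hcost.
  - destruct l; [|simpl in Hlen; lia]. simpl in Hc; subst.
    rewrite (G_il X op mul inv e HG). apply HUo.
  - destruct l as [|p0 l0] eqn:Hl.
    + simpl in Hc; subst. rewrite (G_il X op mul inv e HG). apply HUo.
    + rewrite <- Hl in *.
      destruct (split_list l 0 (cost l / 2)) as [l1 [[z m] [l2 [Heq [H1 H2]]]]].
      { rewrite Hl; discriminate. } { lra. } { pose proof (cost_nonneg l); lra. } { lra. }
      rewrite Heq in Hc, Hcost, Hlen.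
      apply chain_app in Hc. destruct Hc as [w [Hc1 [Hwz Hc2]]].
      rewrite cost_app in Hcost. simpl in Hcost.
      rewrite Heq, cost_app in H1, H2. simpl in H1, H2.
      rewrite length_app in Hlen; simpl in Hlen.
      pose proof (cost_nonneg l1). pose proof (cost_nonneg l2). pose proof (pw_pos m).
      pose proof (pw_S (S n)) as HpS.
      rewrite <- (G_chain3 X op mul inv e HG x w z y).
      apply HUc.
      * apply (IH l1); auto; [lia|]. lra.
      * apply (U_dec (S n) m); auto. apply pw_ge. lra.
      * apply (IH l2); auto; [lia|]. lra.
Qed.

Definition Sc x y (s : R) := exists l, chain x y l /\ cost l = s.

Definition is_inf (E : R -> Prop) (m : R) :=
  (forall s, E s -> m <= s) /\ (forall b, (forall s, E s -> b <= s) -> b <= m).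

Definition d0 x y := epsilon (inhabits 0) (is_inf (Sc x y)).

Lemma d0_spec x y : is_inf (Sc x y) (d0 x y).
Proof.
  unfold d0; apply epsilon_spec.
  destruct (completeness (fun t => Sc x y (- t))) as [m [Hub Hl]].
  - exists 0. intros t [l [_ Hl]]. pose proof (cost_nonneg l); lra.
  - exists (- pw 0). exists ((y, 0%nat) :: nil). simpl. split; [split; auto|lra].
  - exists (- m). split.
    + intros s Hs. assert (- s <= m) by (apply Hub; rewrite Ropp_involutive; auto). lra.
    + intros b Hb. assert (m <= - b); [|lra].
      apply Hl. intros t Ht. specialize (Hb _ Ht). lra.
Qed.

Lemma d0_lb x y l : chain x y l -> d0 x y <= cost l.
Proof. intro H. apply (proj1 (d0_spec x y)). exists l; auto. Qed.

Lemma d0_approx x y eps : 0 < eps -> exists l, chain x y l /\ cost l < d0 x y + eps.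
Proof.
  intro He. apply NNPP; intro Hn.
  assert (d0 x y + eps <= d0 x y); [|lra].
  apply (proj2 (d0_spec x y)). intros s [l [Hc <-]].
  apply Rnot_lt_le. intro Hlt. apply Hn. eauto.
Qed.

Lemma d0_nonneg x y : 0 <= d0 x y.
Proof.
  apply (proj2 (d0_spec x y)). intros s [l [_ <-]]. apply cost_nonneg.
Qed.

Lemma d0_refl x : d0 x x = 0.
Proof.
  pose proof (d0_nonneg x x). pose proof (d0_lb x x nil eq_refl). simpl in *. lra.
Qed.

Lemma d0_tri x y z : d0 x z <= d0 x y + d0 y z.
Proof.
  apply Rnot_lt_le; intro H.
  set (eps := (d0 x z - d0 x y - d0 y z) / 2).
  assert (He : 0 < eps) by (unfold eps; lra).
  destruct (d0_approx x y eps He) as [l1 [H1 C1]].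
  destruct (d0_approx y z eps He) as [l2 [H2 C2]].
  assert (Hc : chain x z (l1 ++ l2)) by (apply chain_app; eauto).
  apply d0_lb in Hc. rewrite cost_app in Hc. unfold eps in *. lra.
Qed.

Lemma d0_small n x y : d0 x y < pw (S n) -> U n (mul (inv x) y).
Proof.
  intro H. destruct (d0_approx x y (pw (S n) - d0 x y)) as [l [Hc Hcost]]; [lra|].
  apply (chain_lemma (length l) l (le_n _) n x y Hc). lra.
Qed.

Lemma d0_step n x y : U n (mul (inv x) y) -> d0 x y <= pw n.
Proof.
  intro H. pose proof (d0_lb x y ((y, n) :: nil)) as Hl. simpl in Hl.
  assert (d0 x y <= pw n + 0) by (apply Hl; split; auto). lra.
Qed.

Definition dd x y := d0 x y + d0 y x.

Lemma dd_metric : is_metric X dd.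
Proof.
  unfold dd. split; [intros; pose proof (d0_nonneg x y); pose proof (d0_nonneg y x); lra|].
  split; [|split; [intros; lra|]].
  - intros x y; split.
    + intro H0. pose proof (d0_nonneg x y); pose proof (d0_nonneg y x).
      assert (Hz : d0 x y = 0) by lra.
      assert (Hall : forall n, U n (mul (inv x) y)).
      { intro n. apply d0_small. rewrite Hz. apply pw_pos. }
      apply NNPP; intro Hxy.
      assert (Hne : e <> mul (inv x) y).
      { intro Heq. apply Hxy. rewrite <- (G_canc' X op mul inv e HG x y), <- Heq.
        rewrite (G_er X op mul inv e HG); auto. }
      destruct (G_haus X op mul inv e HG _ _ Hne) as [P [Q [HP [HQ [Pe [Qz Hdis]]]]]].
      destruct (HUb P (nbhd_open X op P e HP Pe)) as [n Hn].
      apply (Hdis (mul (inv x) y)); auto.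
    + intros ->. rewrite d0_refl; lra.
  - intros x y z. pose proof (d0_tri x y z). pose proof (d0_tri z y x). lra.
Qed.

Lemma dd_top : forall V, op V <-> (forall x, V x -> exists eps, 0 < eps /\
                                   forall y, dd x y < eps -> V y).
Proof.
  intro V; split.
  - intros HV x Vx.
    assert (Hn : nbhd X op (fun w => V (mul x w)) e).
    { apply (trans_nbhd X op mul inv e HG). rewrite (G_er X op mul inv e HG).
      apply nbhd_open; auto. }
    destruct (HUb _ Hn) as [n Hsub].
    exists (pw (S n)). split; [apply pw_pos|].
    intros y Hy. unfold dd in Hy. pose proof (d0_nonneg y x).
    assert (Hu : U n (mul (inv x) y)) by (apply d0_small; lra).
    apply Hsub in Hu. rewrite (G_canc' X op mul inv e HG) in Hu; auto.
  - intro H. apply op_of_nbhd; auto. intros x Vx.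
    destruct (H x Vx) as [eps [He Hb]].
    destruct (pw_small (eps / 2)) as [n Hn]; [lra|].
    exists (fun y => U n (mul (inv x) y)). split.
    { apply (op_transl X op mul inv e HG). apply HUo. }
    split. { rewrite (G_il X op mul inv e HG). apply HUo. }
    intros y Hy. apply Hb. unfold dd.
    pose proof (d0_step n x y Hy).
    assert (Hy' : U n (mul (inv y) x)).
    { apply HUs in Hy. rewrite (G_invmul X op mul inv e HG), (G_invinv X op mul inv e HG) in Hy; auto. }
    pose proof (d0_step n y x Hy'). lra.
Qed.

Lemma chain_metrizable : metrizable X op.
Proof. exists dd. split; [apply dd_metric | apply dd_top]. Qed.

End Chain.

Lemma fc_metrizable X op mul inv e : topological_group X op mul inv e -> fc X op e ->
  metrizable X op.
Proof.
  intros HG Hfc. destruct (exists_U X op mul inv e HG Hfc) as [U [H0 [Ho [Hs [Hc Hb]]]]].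
  apply (chain_metrizable X op mul inv e HG U); auto.
Qed.
Section Tower.
Variable X : Type.
Variable c : set X -> X.

Definition gstep (A : set X) : set X := fun x => A x \/ x = c A.

Inductive Tw : set X -> Prop :=
| Tw_g : forall A, Tw A -> Tw (gstep A)
| Tw_u : forall F : set X -> Prop, (forall A, F A -> Tw A) ->
         Tw (fun x => exists A, F A /\ A x).

Definition extreme (A : set X) := forall B, Tw B -> sub X B A -> ~ sub X A B -> sub X (gstep B) A.

Lemma sub_gstep A : sub X A (gstep A).
Proof. intros x H; left; auto. Qed.

Lemma tw_lemma1 A : extreme A -> forall B, Tw B -> sub X B A \/ sub X (gstep A) B.
Proof.
  intros Hext B HB. induction HB as [B HB IH | F HF IH].
  - destruct IH as [Hs | Hs].
    + destruct (classic (sub X A B)) as [Hab | Hab].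
      * right. assert (A = B) by (apply set_ext; split; auto). subst; intros x; auto.
      * left. apply Hext; auto.
    + right. intros x Hx. left; auto.
  - destruct (classic (exists A', F A' /\ sub X (gstep A) A')) as [[A' [HA' Hs]] | Hno].
    + right. intros x Hx. exists A'; split; auto.
    + left. intros x [A' [HA' Hx]].
      destruct (IH A' HA') as [Hs | Hs]; auto.
      exfalso; apply Hno; eauto.
Qed.

Lemma tw_extreme A : Tw A -> extreme A.
Proof.
  induction 1 as [A HA IH | F HF IH].
  - intros B HB Hs Hns.
    destruct (tw_lemma1 A IH B HB) as [H1 | H1]; [|contradiction].
    destruct (classic (sub X A B)) as [Hab | Hab].
    + assert (A = B) by (apply set_ext; split; auto). subst. intros x; auto.
    + intros x Hx. left. apply (IH B HB H1 Hab x Hx).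
  - intros B HB Hs Hns.
    apply not_all_ex_not in Hns. destruct Hns as [y Hy].
    apply imply_to_and in Hy. destruct Hy as [[A' [HA' Ay]] Hby].
    destruct (tw_lemma1 A' (IH A' HA') B HB) as [H1 | H1].
    + assert (Hn : ~ sub X A' B) by (intro Hc; apply Hby; auto).
      intros x Hx. exists A'; split; auto. apply (IH A' HA' B HB H1 Hn x Hx).
    + exfalso; apply Hby. apply H1. left; auto.
Qed.

Lemma tw_comp A B : Tw A -> Tw B -> sub X B A \/ sub X (gstep A) B.
Proof. intros HA HB. apply tw_lemma1; auto. apply tw_extreme; auto. Qed.

End Tower.

Section Metric.
Variable X : Type.
Variable op : set X -> Prop.
Hypothesis Htop : is_topology X op.
Hypothesis Hhaus : hausdorff X op.
Variable d : X -> X -> R.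
Hypothesis Hd : is_metric X d.
Hypothesis Hdt : forall U, op U <-> (forall x, U x -> exists eps, 0 < eps /\
                                   forall y, d x y < eps -> U y).

Lemma d_pos x y : 0 <= d x y. Proof. apply Hd. Qed.
Lemma d_refl x : d x x = 0. Proof. apply Hd; auto. Qed.
Lemma d_sym x y : d x y = d y x. Proof. apply Hd. Qed.
Lemma d_tri x y z : d x z <= d x y + d y z. Proof. apply Hd. Qed.

Definition ball x r := fun y => d x y < r.

Lemma ball_open x r : op (ball x r).
Proof.
  apply Hdt. intros y Hy. exists (r - d x y). split; [unfold ball in Hy; lra|].
  intros z Hz. unfold ball. pose proof (d_tri x y z). lra.
Qed.

Lemma ball_center x r : 0 < r -> ball x r x.
Proof. intro; unfold ball; rewrite d_refl; auto. Qed.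

Lemma nbhd_ball O x : nbhd X op O x -> exists eps, 0 < eps /\ sub X (ball x eps) O.
Proof.
  intros [U [HU [Ux HUO]]]. destruct (proj1 (Hdt U) HU x Ux) as [eps [He Hb]].
  exists eps; split; auto. intros y Hy; apply HUO, Hb, Hy.
Qed.

Lemma metric_regular : regular X op.
Proof.
  split; auto. intros x U HU Ux.
  destruct (proj1 (Hdt U) HU x Ux) as [eps [He Hb]].
  exists (ball x (eps / 2)). split; [apply ball_open|]. split; [apply ball_center; lra|].
  intros y Hy. apply Hb.
  destruct (Hy (ball y (eps / 2))) as [w [H1 H2]].
  { apply nbhd_open; auto. apply ball_open. apply ball_center; lra. }
  unfold ball in *. pose proof (d_tri x w y). rewrite (d_sym w y) in *. lra.
Qed.

Lemma metric_pc : point_cosmic X op.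
Proof.
  split; [apply metric_regular|]. intro x.
  exists (fun N => exists n, ball x (/ INR (S n)) = N). split.
  { exists (fun n => ball x (/ INR (S n))). intros N [n Hn]; eauto. }
  intros O HO. destruct (nbhd_ball O x HO) as [eps [He Hb]].
  destruct (archimed_cor1 eps He) as [N [HN HN0]].
  destruct N as [|n]; [lia|].
  apply nbhd_mono with (ball x (/ INR (S n))).
  - apply nbhd_open; auto. apply ball_open. apply ball_center.
    apply Rinv_0_lt_compat, lt_0_INR; lia.
  - intros y Hy. exists (ball x (/ INR (S n))). split; [eauto|]. split; auto.
    intros z Hz. apply Hb. unfold ball in *; lra.
Qed.

Variable x0 : X.

Definition cch (A : set X) : X := epsilon (inhabits x0) (fun x => ~ A x).

Lemma cch_spec A : (exists x, ~ A x) -> ~ A (cch A).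
Proof. intro H. unfold cch. apply (epsilon_spec (inhabits x0) (fun x => ~ A x)). auto. Qed.

Definition Az r z : set X := fun x => exists A, (Tw X cch A /\ forall y, A y -> r <= d z y) /\ A x.
Definition phi r z := cch (Az r z).

Lemma Az_tw r z : Tw X cch (Az r z).
Proof. unfold Az. apply Tw_u. intros A [HA _]; auto. Qed.

Lemma Az_far r z y : Az r z y -> r <= d z y.
Proof. intros [A [[_ H] Ay]]; auto. Qed.

Lemma phi_close r z : 0 < r -> d z (phi r z) < r.
Proof.
  intro Hr. apply Rnot_le_lt; intro Hle.
  assert (Hn : ~ Az r z (phi r z)).
  { apply cch_spec. exists z. intro Hz. apply Az_far in Hz. rewrite d_refl in Hz. lra. }
  apply Hn. exists (gstep X cch (Az r z)). split; [split|].
  - apply Tw_g, Az_tw.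
  - intros y [Hy | ->]; [apply Az_far; auto | auto].
  - right; auto.
Qed.

Definition cell r dl x : set X := fun z => phi r z = x /\ d z x < r - dl.

Lemma cell_sep r dl x1 x2 z w : 0 < dl -> cell r dl x1 z -> cell r dl x2 w -> d z w < dl -> x1 = x2.
Proof.
  intros Hdl [H1 C1] [H2 C2] Hzw.
  destruct (tw_comp X cch _ _ (Az_tw r z) (Az_tw r w)) as [Hs | Hs].
  - destruct (tw_comp X cch _ _ (Az_tw r w) (Az_tw r z)) as [Hs' | Hs'].
    + assert (Heq : Az r z = Az r w) by (apply set_ext; split; auto).
      subst x1 x2. unfold phi. rewrite Heq; auto.
    + exfalso. assert (Hf : Az r z x2) by (apply Hs'; right; auto).
      apply Az_far in Hf. pose proof (d_tri z w x2). lra.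
  - exfalso. assert (Hf : Az r w x1) by (apply Hs; right; auto).
    apply Az_far in Hf. pose proof (d_tri w z x1). rewrite (d_sym w z) in *. lra.
Qed.

Definition Fam (m k : nat) : set X -> Prop := fun N => exists x, N = cell (pw m) (pw k) x.

Lemma Fam_discrete m k : discrete_family X op (Fam m k).
Proof.
  intro p. exists (ball p (pw k / 2)). split.
  { apply nbhd_open; auto. apply ball_open. apply ball_center. pose proof (pw_pos k); lra. }
  intros A B [x1 ->] [x2 ->] [z [Oz Az1]] [w [Ow Bw]].
  assert (x1 = x2); [|subst; tauto].
  apply (cell_sep (pw m) (pw k) x1 x2 z w); auto. apply pw_pos.
  unfold ball in *. pose proof (d_tri z p w). rewrite (d_sym z p) in *. lra.
Qed.

Lemma metric_sigma : sigma_space X op.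
Proof.
  split; [apply metric_regular|].
  exists (fun n => Fam (fst (Cantor.of_nat n)) (snd (Cantor.of_nat n))).
  split; [intro; apply Fam_discrete|].
  intros p O HO. destruct (nbhd_ball O p HO) as [eps [He Hb]].
  destruct (pw_small (eps / 4)) as [m Hm]; [lra|].
  pose proof (pw_pos m).
  apply nbhd_mono with (ball p (eps / 2)).
  { apply nbhd_open; auto. apply ball_open. apply ball_center; lra. }
  intros y Hy.
  pose proof (phi_close (pw m) y (pw_pos m)) as Hc.
  destruct (pw_small (pw m - d y (phi (pw m) y))) as [k Hk]; [lra|].
  exists (cell (pw m) (pw k) (phi (pw m) y)). split; [|split].
  - exists (Cantor.to_nat (m, k)). rewrite Cantor.cancel_of_to. simpl.
    exists (phi (pw m) y); auto.
  - intros z [Hz1 Hz2]. apply Hb. unfold ball in *.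
    pose proof (d_tri p y z). pose proof (d_tri y (phi (pw m) y) z).
    rewrite (d_sym (phi (pw m) y) z) in *. pose proof (pw_pos k). lra.
  - split; auto. lra.
Qed.

End Metric.
Theorem theorem2 (X : Type) (op : set X -> Prop)
  (mul : X -> X -> X) (inv : X -> X) (e : X) :
  topological_group X op mul inv e -> baire X op ->
  (metrizable X op <-> point_cosmic X op) /\
  (point_cosmic X op <-> sigma_space X op).
Proof.
  intros HG HB.
  pose proof (G_top X op mul inv e HG) as Htop.
  pose proof (G_haus X op mul inv e HG) as Hhaus.
  assert (M2P : metrizable X op -> point_cosmic X op).
  { intros [d [Hd Hdt]]. eapply metric_pc; eauto. }
  assert (M2S : metrizable X op -> sigma_space X op).
  { intros [d [Hd Hdt]]. eapply metric_sigma; eauto. }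
  assert (P2M : point_cosmic X op -> metrizable X op).
  { intro H. apply (fc_metrizable X op mul inv e HG). apply (pc_fc X op mul inv e HG HB H). }
  assert (S2M : sigma_space X op -> metrizable X op).
  { intro H. apply (fc_metrizable X op mul inv e HG). apply (sigma_fc X op mul inv e HG HB H). }
  tauto.
Qed.
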